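(* Let $G=(V,E)$ and $H=(U,F)$ be finite simple graphs, each with $n$ vertices. Then the tree generation stage of the uniqueness tree algorithm (described in the context), which constructs the uniqueness tree $T(v)$ for every vertex $v$ of $G$ and of $H$, runs in time $O(n^6)$ in the worst case.
   Context: A simple graph is a finite, unweighted, undirected graph with no loops or multiple edges; the size $n$ of a graph is its number of vertices. Tree generation stage: for each of the two graphs and each vertex $v$ of it, build a rooted tree $T(v)$ whose nodes are labelled by vertices of the graph, level by level. Level $0$ consists of the root, labelled $v$. Given the current level, a node of that level is called unique if its label occurs exactly once among the labels of the nodes of that level. Each non-unique node becomes a leaf (no children); each unique node labelled $u$ receives one child for each neighbour $w$ of $u$ in the graph, labelled $w$; these children form the next level. This is repeated while some node on the current level is unique and the height of $T(v)$ is less than $n$. *)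

(* Defs.v *)
From mathcomp Require Import all_boot.
Set Implicit Arguments. Unset Strict Implicit. Unset Printing Implicit Defensive.

Definition simple_graph (T : finType) (e : rel T) : Prop :=
  symmetric e /\ irreflexive e.

Section UTree.
Variables (T : finType) (e : rel T).

(* A level of T(v) is the sequence of the labels of its nodes (in order). *)
Definition unique_on (s : seq T) (x : T) : bool := count_mem x s == 1.

Definition nbrs (u : T) : seq T := [seq w <- enum T | e u w].

(* next level: non-unique nodes are leaves, each unique node labelled u
   gets one child per neighbour w of u, labelled w *)
Definition next_level (s : seq T) : seq T :=
  flatten [seq (if unique_on s u then nbrs u else [::]) | u <- s].

(* Elementary-step cost of processing a level s (m := size s):
   - determining which nodes are unique by pairwise comparison: m * m,
   - deciding leaf / non-leaf for every node (and the loop test): m,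
   - creating the children of each unique node by scanning the n vertices
     for adjacency: n per unique node. *)
Definition level_cost (s : seq T) : nat :=
  size s * size s + size s + count (unique_on s) s * #|T|.

(* The loop continues while some node of the current level is unique and
   the current height is < n = #|T|; the fuel never binds (h < n). *)
Fixpoint gen_levels (fuel h : nat) (s : seq T) : seq (seq T) :=
  match fuel with
  | 0 => [:: s]
  | f.+1 => if has (unique_on s) s && (h < #|T|)
            then s :: gen_levels f h.+1 (next_level s)
            else [:: s]
  end.

Fixpoint gen_cost (fuel h : nat) (s : seq T) : nat :=
  match fuel with
  | 0 => size s
  | f.+1 => if has (unique_on s) s && (h < #|T|)
            then level_cost s + gen_cost f h.+1 (next_level s)
            else size s (* cost of the final loop test *)
  end.

Definition utree_levels (v : T) : seq (seq T) := gen_levels #|T| 0 [:: v].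
Definition utree_cost (v : T) : nat := gen_cost #|T| 0 [:: v].

End UTree.

Definition tree_stage_cost (T1 T2 : finType) (e1 : rel T1) (e2 : rel T2) : nat :=
  \sum_(v : T1) utree_cost e1 v + \sum_(u : T2) utree_cost e2 u.

(* Main.v *)
Require Import Defs.
From mathcomp Require Import all_boot.
From mathcomp Require Import zify.

Section Aux.
Variables (T : finType) (e : rel T).

Lemma count_unique_le (s : seq T) : count (unique_on s) s <= #|T|.
Proof.
have U : uniq [seq u <- s | unique_on s u].
  apply: count_mem_uniq => x.
  rewrite count_filter.
  case Hx: (x \in [seq u <- s | unique_on s u]).
    move: (Hx); rewrite mem_filter => /andP [Hu Hxs].
    have Hle : count (predI (pred1 x) (unique_on s)) s <= count_mem x s.
      by apply: sub_count => y /andP [].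
    rewrite (eqP Hu) in Hle.
    have Hge : 0 < count (predI (pred1 x) (unique_on s)) s.
      by rewrite -has_count; apply/hasP; exists x => //=; rewrite eqxx.
    by apply/eqP; rewrite /= eqn_leq Hle Hge.
  apply/eqP; rewrite -leqn0 leqNgt -has_count; apply/hasP => -[y Hy /= /andP [/eqP Hxy Hu]].
  by move: Hx; rewrite mem_filter -Hxy Hu Hy.
rewrite -size_filter -(card_uniqP U); exact: max_card.
Qed.

Lemma size_nbrs (u : T) : size (nbrs e u) <= #|T|.
Proof. by rewrite /nbrs size_filter cardE; apply: count_size. Qed.

Lemma size_next (s : seq T) : size (next_level e s) <= count (unique_on s) s * #|T|.
Proof.
rewrite /next_level size_flatten /shape -map_comp.
have G : forall r, sumn [seq (size \o (fun u => if unique_on s u then nbrs e u else [::])) i | i <- r]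
   <= count (unique_on s) r * #|T|.
  elim => [|x t IH] //=.
  rewrite mulnDl; apply: leq_add; last exact: IH.
  by case: (unique_on _ x) => //=; rewrite mul1n size_nbrs.
exact: G.
Qed.

Lemma gen_cost_le f h s : 0 < #|T| -> size s <= #|T| ^ 2 ->
  gen_cost e f h s <= f * (3 * #|T| ^ 4) + #|T| ^ 2.
Proof.
move=> Hn; elim: f h s => [|f IH] h s Hs /=; first by rewrite add0n.
case: ifP => _; last by rewrite mulSn addnC; apply: leq_trans Hs (leq_addr _ _).
have Hnx : size (next_level e s) <= #|T| ^ 2.
  apply: leq_trans (size_next s) _.
  by rewrite expnS expn1 leq_mul2r count_unique_le orbT.
have := IH h.+1 _ Hnx.
have Hc := count_unique_le s.
rewrite /level_cost.
have H1 : size s * size s <= #|T| ^ 4.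
  have -> : #|T| ^ 4 = #|T| ^ 2 * #|T| ^ 2 by rewrite -expnD.
  exact: leq_mul.
have H2 : #|T| ^ 2 <= #|T| ^ 4 by apply: leq_pexp2l.
have H3 : count (unique_on s) s * #|T| <= #|T| ^ 4.
  apply: leq_trans (leq_mul Hc (leqnn _)) _.
  by rewrite mulnn; apply: leq_pexp2l.
rewrite mulSn.
move: H1 H2 H3 Hs; move: (#|T| ^ 4) (#|T| ^ 2) (size s * size s) (count (unique_on s) s * #|T|) (gen_cost e f h.+1 (next_level e s)) (size s).
move=> A B C D E F; lia.
Qed.

Lemma utree_le (v : T) : utree_cost e v <= 4 * #|T| ^ 5.
Proof.
have Hn : 0 < #|T| by apply/card_gt0P; exists v.
have Hs : size [:: v] <= #|T| ^ 2 by rewrite /= expn_gt0 Hn.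
have := @gen_cost_le #|T| 0 _ Hn Hs.
rewrite /utree_cost.
have H2 : #|T| ^ 2 <= #|T| ^ 5 by apply: leq_pexp2l.
have -> : #|T| * (3 * #|T| ^ 4) = 3 * #|T| ^ 5 by rewrite mulnCA -expnS.
lia.
Qed.

Lemma sum_utree_le : \sum_(v : T) utree_cost e v <= 4 * #|T| ^ 6.
Proof.
apply: (@leq_trans (\sum_(v : T) 4 * #|T| ^ 5)).
  by apply: leq_sum => v _; exact: utree_le.
by rewrite sum_nat_const mulnCA -expnS.
Qed.
End Aux.

Theorem lemma1 :
  exists c : nat,
    forall (T1 T2 : finType) (e1 : rel T1) (e2 : rel T2) (n : nat),
      simple_graph e1 -> simple_graph e2 ->
      #|T1| = n -> #|T2| = n ->
      tree_stage_cost e1 e2 <= c * n ^ 6.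
Proof.
exists 8 => T1 T2 e1 e2 n _ _ H1 H2.
rewrite /tree_stage_cost.
have := @sum_utree_le _ e1; have := @sum_utree_le _ e2.
rewrite H1 H2; lia.
Qed.
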